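(* Let $G$ be a fullerene graph that has an efficient dominating set. Then the number of vertices of $G$ is divisible by $8$.
   Context: A fullerene graph is a finite simple connected (equivalently, $3$-connected) plane cubic graph all of whose faces are pentagons or hexagons. An efficient dominating set of a graph $G$ is an independent vertex set $D$ of $G$ such that every vertex of $G$ not in $D$ is adjacent to exactly one vertex of $D$. *)

(* Defs.v *)
From mathcomp Require Import all_boot fingroup perm.
Set Implicit Arguments. Unset Strict Implicit. Unset Printing Implicit Defensive.

Section Fullerene.
Variables (V : finType) (adj : rel V).

Definition simple_graph : Prop := symmetric adj /\ irreflexive adj.

Definition connected_graph : Prop := forall x y : V, connect adj x y.

Definition cubic : Prop := forall v : V, #|[set w | adj v w]| = 3.

Definition dart : pred (V * V) := [pred p | adj p.1 p.2].

(* A rotation system: for each vertex v, a permutation rot v of V which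
   maps the neighbourhood of v to itself, acting on it as a single cycle. *)
Definition rotation_system (rot : V -> {perm V}) : Prop :=
  (forall v u, adj v u -> adj v (rot v u)) /\
  (forall v u w, adj v u -> adj v w -> fconnect (rot v) u w).

Definition face_step (rot : V -> {perm V}) (p : V * V) : V * V :=
  (p.2, rot p.2 p.1).

Definition nfaces (rot : V -> {perm V}) : nat := fcard (face_step rot) dart.

(* Plane embedding with all faces pentagons or hexagons: a rotation system
   (combinatorial embedding) satisfying Euler's formula V - E + F = 2,
   i.e. 2(|V| + F) = (#darts) + 4 since #darts = 2E, whose face boundary
   walks all have length 5 or 6. *)
Definition plane_pent_hex_embedding : Prop :=
  exists rot : V -> {perm V},
    [/\ rotation_system rot,
        (2 * (#|V| + nfaces rot) = #|dart| + 4)%N &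
        forall d, dart d -> fingraph.order (face_step rot) d \in [:: 5; 6]%N].

Definition fullerene : Prop :=
  [/\ simple_graph, connected_graph, cubic & plane_pent_hex_embedding].

Definition independent (D : {set V}) : Prop :=
  forall x y, x \in D -> y \in D -> ~~ adj x y.

Definition efficient_dominating (D : {set V}) : Prop :=
  independent D /\
  forall x, x \notin D -> #|[set y in D | adj x y]| = 1.

End Fullerene.

(* Main.v *)
Require Import Defs.
From mathcomp Require Import all_boot fingroup perm.
Set Implicit Arguments. Unset Strict Implicit. Unset Printing Implicit Defensive.

Lemma iter_fix (T : finType) (r : T -> T) u n : r u = u -> iter n r u = u.
Proof. by move=> H; elim: n => //= n ->. Qed.

Lemma iter_fix2 (T : finType) (r : T -> T) u n : r (r u) = u ->
  iter n r u \in [set u; r u].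
Proof.
move=> H; elim: n => [|n IH] /=; first by rewrite !inE eqxx.
by move: IH; rewrite !inE => /orP[]/eqP->; rewrite ?H eqxx ?orbT.
Qed.

Lemma rot3 (V : finType) (adj : rel V) (r : {perm V}) v
  (Hmap : forall u, adj v u -> adj v (r u))
  (Hcyc : forall u w, adj v u -> adj v w -> fconnect r u w)
  (Hcard : #|[set w | adj v w]| = 3) u (Hu : adj v u) :
  [/\ r u != u, r (r u) != u, r (r (r u)) = u &
      forall w, adj v w -> [\/ w = u, w = r u | w = r (r u)]].
Proof.
have reach w : adj v w -> exists n, w = iter n r u.
  move=> Hw; exists (findex r u w); by rewrite iter_findex // Hcyc.
have H1 : r u != u.
  apply/eqP=> E.
  have : [set w | adj v w] \subset [set u].
    apply/subsetP=> w; rewrite inE => /reach [n ->].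
    by rewrite iter_fix // inE.
  by move/subset_leq_card; rewrite Hcard cards1.
have H2 : r (r u) != u.
  apply/eqP=> E.
  have : [set w | adj v w] \subset [set u; r u].
    apply/subsetP=> w; rewrite inE => /reach [n ->].
    exact: iter_fix2.
  move/subset_leq_card; rewrite Hcard cards2.
  by case: (u != r u).
have H12 : r (r u) != r u by apply: contra H1 => /eqP/perm_inj ->.
have Hsub : [set u; r u; r (r u)] \subset [set w | adj v w].
  by apply/subsetP=> w; rewrite !inE => /orP[/orP[]|]/eqP->; rewrite ?Hmap.
have Hc3 : #|[set u; r u; r (r u)]| = 3.
  rewrite setUC cardsU1 cards2 !inE (negbTE H12) (negbTE H2) /=.
  by rewrite eq_sym H1.
have HE : [set u; r u; r (r u)] = [set w | adj v w].
  by apply/eqP; rewrite eqEcard Hsub Hcard Hc3.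
have Hall w : adj v w -> [\/ w = u, w = r u | w = r (r u)].
  move=> Hw; have : w \in [set w | adj v w] by rewrite inE.
  by rewrite -HE !inE => /orP[/orP[]|]/eqP->; [apply: Or31|apply: Or32|apply: Or33].
split => //.
have : adj v (r (r (r u))) by rewrite !Hmap.
case/Hall => [//|/perm_inj E|/perm_inj E].
  by move: H2; rewrite E eqxx.
by move/perm_inj: E H1 => ->; rewrite eqxx.
Qed.
Lemma even_invol (T : finType) (g : T -> T) (A : {set T}) :
  (forall a, a \in A -> [/\ g a \in A, g a != a & g (g a) = a]) ->
  ~~ odd #|A|.
Proof.
have [m Hm] : exists m, #|A| <= m by exists #|A|.
elim: m A Hm => [|m IH] A Hm Hg.
  by move: Hm; rewrite leqn0 => /eqP ->.
case: (set_0Vmem A) => [E|[a Ha]]; first by rewrite E cards0.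
have [Hga Hne Hgg] := Hg a Ha.
set A' := A :\: [set a; g a].
have HA' : #|A| = #|A'| + 2.
  rewrite -(cardsID [set a; g a] A) addnC /A'; congr (_ + _).
  have -> : A :&: [set a; g a] = [set a; g a].
    by apply/setIidPr/subsetP=> x; rewrite !inE => /orP[]/eqP->.
  by rewrite cards2 eq_sym Hne.
have Hle : #|A'| <= m.
  by move: Hm; rewrite HA' addn2 ltnS => /ltnW.
rewrite HA' addn2 /= negbK; apply: (IH _ Hle).
move=> x; rewrite !inE negb_or => /andP[/andP[Hxa Hxga] Hx].
have [Hgx Hnx Hggx] := Hg x Hx.
split => //; rewrite ?Hggx ?Hgx ?andbT.
rewrite negb_or; apply/andP; split; apply/eqP => E.
  by move: Hxga; rewrite -E Hggx eqxx.
by move: Hxa; rewrite -Hggx E Hgg eqxx.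
Qed.
Lemma card_sum_pred (T : finType) (A : {set T}) (P : pred T) :
  #|[set y in A | P y]| = \sum_(y in A) (P y : nat).
Proof.
rewrite -sum1_card (eq_bigl (fun y => (y \in A) && P y)); last by move=> y; rewrite inE.
rewrite big_mkcondr /=; apply: eq_bigr => y _; by case: (P y).
Qed.

Lemma count_nonD (V : finType) (adj : rel V) (D : {set V}) :
  (forall v, #|[set w | adj v w]| = 3) -> symmetric adj ->
  independent adj D -> (forall x, x \notin D -> #|[set y in D | adj x y]| = 1) ->
  #|~: D| = 3 * #|D|.
Proof.
move=> Hc Hs Hi He.
rewrite -sum1_card.
rewrite (eq_bigr (fun v => #|[set y in D | adj v y]|)); last first.
  by move=> v; rewrite inE => /He ->.
rewrite (eq_bigr (fun v => \sum_(y in D) (adj v y : nat))); last first.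
  by move=> v _; rewrite card_sum_pred.
rewrite exchange_big /= -sum1_card big_distrr /=.
apply: eq_bigr => y Hy.
rewrite muln1 -(Hc y) -card_sum_pred; apply: eq_card => w.
rewrite !inE (Hs w y); case Hw: (adj y w); rewrite ?andbF ?andbT //.
by apply/negP => Hw'; move: (Hi _ _ Hy Hw'); rewrite Hw.
Qed.

Lemma face_step_inj (V : finType) (rot : V -> {perm V}) : injective (face_step rot).
Proof.
case=> [u v] [u' v']; rewrite /face_step /= => [[E1]]; subst v' => /perm_inj -> //.
Qed.

Theorem mainTheorem2 (V : finType) (adj : rel V) :
  fullerene adj ->
  (exists D : {set V}, efficient_dominating adj D) ->
  (8 %| #|V|)%N.
Proof.
case=> [[Hs Hirr] _ Hcub [rot [[Hmap Hcyc] _ Hord]]] [D [Hind Hed]].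
have R3 v u (Hu : adj v u) := rot3 (Hmap v) (Hcyc v) (Hcub v) Hu.
have uniq x t t' : x \notin D -> t \in D -> t' \in D -> adj x t -> adj x t' -> t = t'.
  move=> Hx Ht Ht' Ha Ha'; have /cards1P [c Hc] : #|[set y in D | adj x y]| == 1 by rewrite Hed.
  have : t \in [set y in D | adj x y] by rewrite inE Ht Ha.
  have : t' \in [set y in D | adj x y] by rewrite inE Ht' Ha'.
  by rewrite Hc !inE => /eqP -> /eqP ->.
have exD x : x \notin D -> exists2 t, t \in D & adj x t.
  move=> Hx; have : 0 < #|[set y in D | adj x y]| by rewrite Hed.
  by case/card_gt0P => t; rewrite inE => /andP[]; exists t.
have Hsym x y : adj x y -> adj y x by rewrite Hs.
pose S := [set p : V * V | [&& adj p.1 p.2, p.1 \notin D, p.2 \notin D & rot p.2 p.1 \in D]].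
pose B := [set p : V * V | rot p.1 p.2 \in D].
have HS : #|S| = #|~: D|.
  pose dn y := odflt y [pick t in D | adj y t].
  have Hdn y : y \notin D -> dn y \in D /\ adj y (dn y).
    move=> Hy; rewrite /dn; case: pickP => [t /andP[]//|H0].
    by have [t Ht Ha] := exD y Hy; move: (H0 t); rewrite Ht Ha.
  pose g y := (rot y (rot y (dn y)), y).
  have -> : S = g @: ~: D.
    apply/setP => -[x y]; rewrite inE /=; apply/idP/imsetP.
    - case/and4P => Ha Hx Hy Hr; exists y; rewrite ?inE //.
      have [Hd Had] := Hdn y Hy.
      have E : rot y x = dn y by apply: (uniq y) => //; apply: Hmap; apply: Hsym.
      have [_ _ H3 _] := R3 y x (Hsym _ _ Ha).
      by rewrite /g -E H3.
    - case=> y'; rewrite inE => Hy [-> ->].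
      have [Hd Had] := Hdn y' Hy.
      have [_ H2 H3 _] := R3 y' _ Had.
      have Ha2 : adj y' (rot y' (rot y' (dn y'))) by rewrite !Hmap.
      rewrite H3 Hd Hy Hsym //= andbT.
      apply/negP => Hx; move: H2; rewrite (uniq y' _ _ Hy Hx Hd Ha2 Had).
      by rewrite eqxx.
  by apply: card_imset => a b [].
have HS1 : ~~ odd #|S :&: B|.
  apply: (even_invol (g := fun p => (p.2, p.1))) => -[x y].
  rewrite !inE /= => /andP[/and4P[Ha Hx Hy Hr] Hb].
  split => //.
  - by rewrite Hsym // Hx Hy Hr Hb.
  - apply/eqP => -[E _]; subst y; by rewrite Hirr in Ha.
have HS2 : ~~ odd #|S :\: B|.
  pose f := face_step rot.
  have injf : injective f by apply: face_step_inj.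
  apply: (even_invol (g := iter 3 f)) => -[x y].
  rewrite !inE /= => /andP[Hb /and4P[Ha Hx Hy Hr]].
  set d' := rot y x in Hr.
  have Hyd : adj y d' by apply: Hmap; apply: Hsym.
  set z := rot d' y.
  have Hdz : adj d' z by apply: Hmap; apply: Hsym.
  have Hz : z \notin D by apply/negP => Hz; move: (Hind _ _ Hr Hz); rewrite Hdz.
  set w := rot z d'.
  have Hzw : adj z w by apply: Hmap; apply: Hsym.
  have [Hzw1 Hzw2 _ _] := R3 z d' (Hsym _ _ Hdz).
  have Hw : w \notin D.
    apply/negP => Hw; move: Hzw1; rewrite -/w (uniq z w d') ?eqxx //.
    by apply: Hsym.
  have [Hx1 Hx2 Hx3 Hxall] := R3 x y Ha.
  set u := rot x (rot x y).
  have Hxu : adj x u by rewrite /u !Hmap.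
  have Hu : u \in D.
    have [t Ht Hxt] := exD x Hx.
    case: (Hxall t Hxt) => E; last by rewrite /u -E.
      by move: Hy; rewrite -E Ht.
    by move: Hb; rewrite -E Ht.
  pose e := (u, x).
  have Hfe : f e = (x, y) by rewrite /f /face_step /= Hx3.
  have He : dart adj e by rewrite /dart inE /=; apply: Hsym.
  have E4 : iter 4 f (x, y) = (w, rot w z) by [].
  have Hio := iter_order injf e.
  have Ho6 : fingraph.order f e = 6.
    move: (Hord e He); rewrite !inE => /orP[/eqP E5|/eqP //].
    move: Hio; rewrite E5 iterSr Hfe E4 => -[Ewu _].
    by move: Hw; rewrite Ewu Hu.
  have E5 : iter 5 f (x, y) = e by rewrite -Hfe -iterSr -Ho6 Hio.
  have Hv : rot w z \in D by move: E5 => /= -[->].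
  have E3 : iter 3 f (x, y) = (z, w) by [].
  have E6 : iter 6 f (x, y) = (x, y) by rewrite -Hfe -iterSr iterS -Ho6 Hio.
split.
  - rewrite Hzw Hz Hw Hv /= andbT.
    have [_ H2 _ Hzall] := R3 z d' (Hsym _ _ Hdz).
    apply/negP => Hr'; move: H2; rewrite -/w (uniq z (rot z w) d') ?eqxx //.
    by apply: Hmap.
    by apply: Hsym.
  - rewrite -[f (f (f (x, y)))]/(iter 3 f (x,y)).
    apply/eqP => E.
    have E4' : iter 4 f e = iter 1 f e by rewrite iterSr Hfe E.
    have h1 : findex f e (iter 4 f e) = 4 by apply: findex_iter; rewrite Ho6.
    have h2 : findex f e (iter 1 f e) = 1 by apply: findex_iter; rewrite Ho6.
    by rewrite E4' h2 in h1.
  - exact: E6.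
have Hk : #|~: D| = 3 * #|D| by apply: count_nonD.
have HV : #|V| = 4 * #|D|.
  by rewrite -(cardsC D) Hk -{1}(mul1n #|D|) -mulnDl.
have : ~~ odd (3 * #|D|) by rewrite -Hk -HS -(cardsID B S) oddD (negbTE HS1) (negbTE HS2).
rewrite oddM /= => Hev.
rewrite HV -(odd_double_half #|D|) (negbTE Hev) add0n -mul2n mulnA.
by apply: dvdn_mulr.
Qed.
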